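(* Let $G$ be a finite graph and let $k$ be an integer with $k>\chi(G)$. Then $G$ is determined up to isomorphism by the recolouring graph $\mathcal{C}_k(G)$, even without knowing the value of $k$: if $G'$ is another finite graph and $k'>\chi(G')$ is an integer with $\mathcal{C}_k(G)\cong\mathcal{C}_{k'}(G')$, then $G\cong G'$.
   Context: All graphs are finite and simple. For a positive integer $k$, a (proper) $k$-colouring of $G$ is a map $c:V(G)\to\{1,\dots,k\}$ with $c(u)\neq c(v)$ for every edge $uv$; $\chi(G)$ is the least $k$ for which a $k$-colouring exists. The $k$-recolouring graph $\mathcal{C}_k(G)$ is the graph whose vertices are all $k$-colourings of $G$, two colourings being adjacent if and only if they differ at exactly one vertex of $G$. *)

(* Defs.v *)
From mathcomp Require Import all_boot.
Set Implicit Arguments. Unset Strict Implicit. Unset Printing Implicit Defensive.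

Record sgraph := SGraph {
  vert :> finType;
  adj : rel vert;
  adj_sym : symmetric adj;
  adj_irr : irreflexive adj }.

Definition graph_iso (V W : Type) (e : rel V) (f : rel W) : Prop :=
  exists phi : V -> W, bijective phi /\ forall x y, f (phi x) (phi y) = e x y.

Definition proper (G : sgraph) (k : nat) (c : {ffun G -> 'I_k}) : bool :=
  [forall u, forall v, adj u v ==> (c u != c v)].

Definition colouring (G : sgraph) (k : nat) := {c : {ffun G -> 'I_k} | proper c}.

Lemma colourable_ex (G : sgraph) : exists k, exists c : {ffun G -> 'I_k}, proper c.
Proof.
exists #|G|; exists [ffun v => enum_rank v].
apply/forallP => u; apply/forallP => v; apply/implyP => huv.
rewrite !ffunE; apply/negP => /eqP /enum_rank_inj huv'.
by subst; rewrite adj_irr in huv.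
Qed.

Definition chi (G : sgraph) : nat :=
  ex_minn (P := fun k => [exists c : {ffun G -> 'I_k}, proper c])
    (let: ex_intro k (ex_intro c hc) := colourable_ex G in
     ex_intro _ k (introT existsP (ex_intro _ c hc))).

Definition recol_adj (G : sgraph) (k : nat) : rel (colouring G k) :=
  fun a b => #|[set v : G | sval a v != sval b v]| == 1.

(* Main.v *)
Require Import Defs.
From mathcomp Require Import all_boot.
Set Implicit Arguments. Unset Strict Implicit. Unset Printing Implicit Defensive.

Lemma properP (G : sgraph) k (c : {ffun G -> 'I_k}) u v :
  Defs.proper c -> adj u v -> c u != c v.
Proof. by move=> /forallP/(_ u)/forallP/(_ v)/implyP; apply. Qed.

Lemma recol_adjP (G : sgraph) k (a b : colouring G k) :
  reflect (exists x, forall z, (sval a z != sval b z) = (z == x)) (recol_adj a b).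
Proof.
rewrite /recol_adj; apply: (iffP cards1P) => [[x /setP H]|[x H]]; exists x.
  by move=> z; move: (H z); rewrite !inE.
by apply/setP => z; rewrite !inE H.
Qed.

Lemma chi_col (G : sgraph) k : chi G < k ->
  exists a : {ffun G -> 'I_k}, exists cc : 'I_k, Defs.proper a /\ forall z, a z != cc.
Proof.
rewrite /chi; case: ex_minnP => m /existsP [c pc] _ hk.
exists [ffun v => widen_ord (ltnW hk) (c v)], (Ordinal hk); split.
  apply/forallP => u; apply/forallP => v; apply/implyP => huv.
  rewrite !ffunE; apply/negP => /eqP [] /val_inj /eqP.
  by apply/negP; apply: properP pc huv.
by move=> z; rewrite ffunE -(inj_eq val_inj) /= neq_ltn ltn_ord.
Qed.

Lemma key (G : sgraph) k (a d : {ffun G -> 'I_k}) cc u v x y :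
  Defs.proper d -> adj u v -> (forall z, a z != cc) ->
  (forall z, ((if z == u then cc else a z) != d z) = (z == x)) ->
  (forall z, ((if z == v then cc else a z) != d z) = (z == y)) ->
  d = a.
Proof.
move=> pd huv ha Hx Hy.
have uv : u != v by apply/eqP => E; move: huv; rewrite E adj_irr.
have Hxu := Hx u; have Hyu := Hy u; have Hxv := Hx v; have Hyv := Hy v.
have vu : v != u by rewrite eq_sym.
rewrite ?eqxx ?(negbTE uv) ?(negbTE vu) in Hxu Hyu Hxv Hyv.
have ux : (u == x) || (u == y).
  rewrite -Hxu -Hyu; case: (eqVneq cc (d u)) => //= <-; exact: ha.
have vx : (v == x) || (v == y).
  rewrite -Hxv -Hyv; case: (eqVneq (a v) (d v)) => //= <-; rewrite ?eqxx /= eq_sym; exact: ha.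
case: (eqVneq u x) => [ex|nx].
  subst x; move: vx; rewrite (negbTE vu) /= => /eqP ey; subst y.
  apply/ffunP => z; case: (eqVneq z u) => [->|zu].
    by move: Hyu; rewrite (negbTE uv) => /negbFE/eqP.
  case: (eqVneq z v) => [->|zv].
    by move: Hxv; rewrite (negbTE vu) => /negbFE/eqP.
  by move: (Hx z); rewrite (negbTE zu) => /negbFE/eqP.
move: ux; rewrite (negbTE nx) /= => /eqP ey; subst y.
move: vx; rewrite (negbTE vu) orbF => /eqP ex; subst x.
move: Hxu Hyv; rewrite (negbTE uv) (negbTE vu) => /negbFE/eqP du /negbFE/eqP dv.
by move: (properP pd huv); rewrite -du -dv eqxx.
Qed.

Lemma square (G : sgraph) k (A Bu Bv : {ffun G -> 'I_k}) w w' :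
  Defs.proper Bu -> Defs.proper Bv -> w != w' -> ~~ adj w w' ->
  (forall z, (A z != Bu z) = (z == w)) ->
  (forall z, (A z != Bv z) = (z == w')) ->
  let D := [ffun z => if z == w then Bu z else Bv z] in
  [/\ Defs.proper D, (forall z, (Bu z != D z) = (z == w')),
      (forall z, (Bv z != D z) = (z == w)) & D != A].
Proof.
move=> pu pv ww nadj Hu Hv D.
have eqA z : z != w -> Bu z = A z by move=> zw; apply/eqP; rewrite eq_sym -[_ == _]negbK Hu (negbTE zw).
have eqB z : z != w' -> Bv z = A z by move=> zw; apply/eqP; rewrite eq_sym -[_ == _]negbK Hv (negbTE zw).
have w'w : w' != w by rewrite eq_sym.
split.
- apply/forallP => z1; apply/forallP => z2; apply/implyP => h12; rewrite !ffunE.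
  case: (eqVneq z1 w) => [e1|n1]; case: (eqVneq z2 w) => [e2|n2].
  + by move: h12; rewrite e1 e2 adj_irr.
  + have n2' : z2 != w'.
      apply/eqP => e; move: nadj; by rewrite -e -e1 h12.
    rewrite (eqB _ n2') -(eqA _ n2); exact: properP pu h12.
  + have n1' : z1 != w'.
      apply/eqP => e; move: nadj; by rewrite -e -e2 adj_sym h12.
    rewrite (eqB _ n1') -(eqA _ n1); exact: properP pu h12.
  + exact: properP pv h12.
- move=> z; rewrite ffunE; case: (eqVneq z w) => [->|zw].
    by rewrite eqxx eq_sym (negbTE w'w).
  by rewrite (eqA _ zw) -Hv.
- move=> z; rewrite ffunE; case: (eqVneq z w) => [->|zw].
    by rewrite (eqB _ ww) Hu eqxx.
  by rewrite eqxx.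
- apply/eqP => /ffunP/(_ w); rewrite ffunE eqxx => /eqP.
  by rewrite eq_sym -[_ == _]negbK Hu eqxx.
Qed.

Lemma half (G G' : sgraph) k k' (psi : colouring G k -> colouring G' k') :
  bijective psi -> (forall a b, recol_adj (psi a) (psi b) = recol_adj a b) ->
  chi G < k ->
  exists f : G -> G', injective f /\ forall u v, adj u v -> adj (f u) (f v).
Proof.
move=> [psii psiK psiKV] Hpsi hk.
have psi_inj : injective psi by apply: can_inj psiK.
have [a0 [cc [pa0 ha0]]] := chi_col hk.
pose al : colouring G k := exist _ a0 pa0.
pose bf v : {ffun G -> 'I_k} := [ffun z => if z == v then cc else a0 z].
have pb v : Defs.proper (bf v).
  apply/forallP => z1; apply/forallP => z2; apply/implyP => h12; rewrite !ffunE.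
  case: (eqVneq z1 v) => [e1|n1]; case: (eqVneq z2 v) => [e2|n2].
  + by move: h12; rewrite e1 e2 adj_irr.
  + by rewrite eq_sym.
  + by [].
  + exact: properP pa0 h12.
pose be v : colouring G k := exist _ (bf v) (pb v).
have Hab v : recol_adj al (be v).
  apply/recol_adjP; exists v => z /=; rewrite ffunE.
  by case: (eqVneq z v) => [->|_]; rewrite ?eqxx ?ha0.
have : forall v, exists w, forall z,
    (sval (psi al) z != sval (psi (be v)) z) = (z == w).
  by move=> v; apply/recol_adjP; rewrite Hpsi.
case/fin_all_exists => f Hf.
have finj : injective f.
  move=> u v fuv; apply/eqP; apply/negPn/negP => uv.
  have : recol_adj (psi (be u)) (psi (be v)).
    apply/recol_adjP; exists (f u) => z.
    case: (eqVneq z (f u)) => [->|zw].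
      apply/negP => /eqP E.
      have E2 : psi (be u) = psi (be v).
        apply/val_inj/ffunP => z0.
        case: (eqVneq z0 (f u)) => [->|zw]; first exact: E.
        apply/eqP; rewrite -[_ == _]negbK.
        have h1 := Hf u z0; have h2 := Hf v z0.
        rewrite (negbTE zw) in h1; rewrite -fuv (negbTE zw) in h2.
        by move: h1 h2 => /negbFE/eqP <- /negbFE/eqP <-; rewrite eqxx.
      have := congr1 (fun c : colouring G k => sval c u) (psi_inj _ _ E2) => /=.
      rewrite !ffunE eqxx (negbTE uv) => /eqP; by rewrite eq_sym (negbTE (ha0 u)).
    have h1 := Hf u z; have h2 := Hf v z.
    rewrite (negbTE zw) in h1; rewrite -fuv (negbTE zw) in h2.
    by move: h1 h2 => /negbFE/eqP <- /negbFE/eqP <-; rewrite eqxx.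
  rewrite Hpsi => /recol_adjP [x Hx].
  have vu : v != u by rewrite eq_sym.
  have := Hx u; have := Hx v; rewrite /= !ffunE !eqxx (negbTE uv) (negbTE vu).
  move=> h1 h2.
  have e1 : v == x by rewrite -h1; apply: ha0.
  have e2 : u == x by rewrite -h2 eq_sym; apply: ha0.
  by move: uv; rewrite (eqP e1) e2.
exists f; split => // u v huv.
have uv : u != v by apply/eqP => E; move: huv; rewrite E adj_irr.
have ww : f u != f v by rewrite (inj_eq finj).
apply/negPn/negP => nadj.
have [pD H1 H2 DA] := square (svalP (psi (be u))) (svalP (psi (be v))) ww nadj (Hf u) (Hf v).
set D := [ffun z => _] in pD H1 H2 DA.
pose de : colouring G' k' := exist _ D pD.
have r1 : recol_adj (be u) (psii de).
  by rewrite -Hpsi psiKV; apply/recol_adjP; exists (f v).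
have r2 : recol_adj (be v) (psii de).
  by rewrite -Hpsi psiKV; apply/recol_adjP; exists (f u).
move/recol_adjP: r1 => [x Hx]; move/recol_adjP: r2 => [y Hy].
have E : sval (psii de) = a0.
  apply: (key (svalP (psii de)) huv ha0 (x := x) (y := y)).
    by move=> z; rewrite -Hx /= ffunE.
  by move=> z; rewrite -Hy /= ffunE.
have : psii de = al by apply: val_inj.
move/(congr1 psi); rewrite psiKV => /(congr1 val) /= DE.
by move: DA; rewrite DE eqxx.
Qed.

Lemma combine (G G' : sgraph) (f : G -> G') (g : G' -> G) :
  injective f -> (forall u v, adj u v -> adj (f u) (f v)) ->
  injective g -> (forall u v, adj u v -> adj (g u) (g v)) ->
  graph_iso (@adj G) (@adj G').
Proof.
move=> fi fh gi gh.
have cf := leq_card f fi; have cg := leq_card g gi.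
exists f; split; first exact: inj_card_bij.
pose E := [set p : G * G | adj p.1 p.2].
pose E' := [set p : G' * G' | adj p.1 p.2].
pose F (p : G * G) := (f p.1, f p.2).
pose H (p : G' * G') := (g p.1, g p.2).
have Fi : injective F by move=> [a b] [c d] [] /fi -> /fi ->.
have Hi : injective H by move=> [a b] [c d] [] /gi -> /gi ->.
have sF : F @: E \subset E'.
  by apply/subsetP => _ /imsetP [[a b] + ->]; rewrite !inE /=; apply: fh.
have sH : H @: E' \subset E.
  by apply/subsetP => _ /imsetP [[a b] + ->]; rewrite !inE /=; apply: gh.
have c1 := subset_leq_card sF; have c2 := subset_leq_card sH.
rewrite card_imset // in c1; rewrite card_imset // in c2.
have EQ : F @: E = E'.
  apply/eqP; rewrite eqEcard sF card_imset //.
move=> x y; apply/idP/idP; last exact: fh.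
move=> hxy; have : (f x, f y) \in E' by rewrite inE.
rewrite -EQ => /imsetP [[a b]]; rewrite inE /= => hab [] /fi -> /fi ->.
exact: hab.
Qed.

Theorem theorem1p2 (G G' : sgraph) (k k' : nat) :
  chi G < k -> chi G' < k' ->
  graph_iso (@recol_adj G k) (@recol_adj G' k') ->
  graph_iso (@adj G) (@adj G').
Proof.
move=> hk hk' [psi [bpsi Hpsi]].
have [psii psiK psiKV] := bpsi.
have [f [fi fh]] := half bpsi Hpsi hk.
have bpsii : bijective psii by exists psi.
have Hpsii : forall a b, recol_adj (psii a) (psii b) = recol_adj a b.
  by move=> a b; rewrite -Hpsi !psiKV.
have [g [gi gh]] := half bpsii Hpsii hk'.
exact: combine fi fh gi gh.
Qed.
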